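(* Let $\{\mathcal S,\mathcal C,\mathcal R\}$ be a reaction network with $d$ species and reactions $\nu_k\to\nu_k'$, $k=1,\dots,m$, and let $\kappa_k>0$ be rate constants. Suppose the deterministic mass-action system $$\dot x=\sum_{k}\kappa_k x^{\nu_k}(\nu_k'-\nu_k)$$ is complex balanced, i.e. it admits a complex balanced equilibrium in $\mathbb{R}^d_{>0}$. For $V>0$ put $\kappa_k^V=\kappa_k/V^{|\nu_k|-1}$. Let $V\to\infty$ along an increasing sequence. Let $\tilde x^V\in\frac1V\mathbb{Z}^d_{\ge0}$ be points with $\lim_{V\to\infty}\tilde x^V=\tilde x\in\mathbb{R}^d_{>0}$. Let $c\in\mathbb{R}^d_{>0}$ be the unique complex balanced equilibrium in the positive stoichiometric compatibility class $(\tilde x+S)\cap\mathbb{R}^d_{>0}$. Define $$\mathcal V(x)=\sum_{i=1}^d\big[x_i(\ln x_i-\ln c_i-1)+c_i\big],\qquad x\in\mathbb{R}^d_{>0}.$$ (a) Let $$\pi^V(x)=\prod_{i=1}^d\frac{(Vc_i)^{x_i}}{x_i!}e^{-Vc_i},\qquad x\in\mathbb{Z}^d_{\ge0},$$ and let $\tilde\pi^V(\tilde w)=\pi^V(V\tilde w)$ for $\tilde w\in\frac1V\mathbb{Z}^d_{\ge0}$. Then $$\lim_{V\to\infty}\Big[-\tfrac1V\ln\tilde\pi^V(\tilde x^V)\Big]=\mathcal V(\tilde x).$$ (b) For each $V$, let $\Gamma^V\subset\mathbb{Z}^d_{\ge0}$ be an irreducible closed component of the state space of the stochastic mass-action Markov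 chain with rate constants $\kappa_k^V$, chosen so that $V\tilde x^V\in\Gamma^V$. Let $$\pi^V_{\Gamma^V}(x)=\frac{1}{Z^V_{\Gamma^V}}\prod_{i=1}^d\frac{(Vc_i)^{x_i}}{x_i!}e^{-Vc_i}\quad (x\in\Gamma^V),$$ where $Z^V_{\Gamma^V}>0$ is the normalizing constant making this a probability distribution on $\Gamma^V$. Define $\tilde\pi^V_{\Gamma^V}(\tilde w)=\pi^V_{\Gamma^V}(V\tilde w)$ for $\tilde w\in\frac1V\Gamma^V$. Then $$\lim_{V\to\infty}\tfrac1V\ln Z^V_{\Gamma^V}=0 \qquad\text{and}\qquad \lim_{V\to\infty}\Big[-\tfrac1V\ln\tilde\pi^V_{\Gamma^V}(\tilde x^V)\Big]=\mathcal V(\tilde x).$$ (c) $\mathcal V$ is a Lyapunov function at $c$ on the positive stoichiometric compatibility class $E=(c+S)\cap\mathbb{R}^d_{>0}$, where $f(x)=\sum_k\kappa_kx^{\nu_k}(\nu_k'-\nu_k)$. Precisely: - $\mathcal V(c)=0$; - $\mathcal V(x)>0$ for all $x\in E$ with $x\neq c$; - $\nabla\mathcal V(x)\cdot f(x)\le0$ for all $x\in E$, with equality if and only if $x=c$.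
   Context: Notation: for $u,v\in\mathbb{R}^d_{\ge0}$, $u^v=\prod_iu_i^{v_i}$ with $0^0=1$, and $|\nu_k|=\sum_i\nu_{ki}$. A reaction network consists of species $S_1,\dots,S_d$ and reactions $\nu_k\to\nu_k'$ with $\nu_k,\nu_k'\in\mathbb{Z}^d_{\ge0}$ (the complexes). The stoichiometric subspace is $S=\mathrm{span}\{\nu_k'-\nu_k\}$, and a positive stoichiometric compatibility class is a set $(y+S)\cap\mathbb{R}^d_{>0}$. An equilibrium $c$ of the deterministic mass-action system is complex balanced if for every complex $z$, $$\sum_{k:\nu_k'=z}\kappa_kc^{\nu_k}=\sum_{k:\nu_k=z}\kappa_kc^{\nu_k}.$$ It is known (Horn–Jackson) that if one positive complex balanced equilibrium exists, then each positive stoichiometric compatibility class contains exactly one positive equilibrium, and it is complex balanced. The stochastic mass-action model with rate constants $\kappa^V_k$ is the continuous-time Markov chain on $\mathbb{Z}^d_{\ge0}$ that jumps from $x$ to $x+\nu_k'-\nu_k$ with intensity $$\lambda_k^V(x)=\kappa_k^V\prod_{i}\frac{x_i!}{(x_i-\nu_{ki})!}\mathbf 1_{\{x_i\ge\nu_{ki}\}}.$$ A closed irreducible component is a subset closed under the chain's transitions in which every state is reachable from every other. *)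

(* Defs.v *)
From Stdlib Require Import Reals Lra List Relations Arith Factorial.
Open Scope R_scope.

Fixpoint sumR (n : nat) (f : nat -> R) : R :=
  match n with O => 0 | S n' => sumR n' f + f n' end.
Fixpoint prodR (n : nat) (f : nat -> R) : R :=
  match n with O => 1 | S n' => prodR n' f * f n' end.
Fixpoint sumN (n : nat) (f : nat -> nat) : nat :=
  match n with O => 0%nat | S n' => (sumN n' f + f n')%nat end.

(* Vectors in R^d are functions nat -> R (only indices < d matter);
   complexes / lattice states are functions nat -> nat. *)
Definition vec := nat -> R.
Definition cplx := nat -> nat.

(* x^v = prod_i x_i^{v_i}, with 0^0 = 1 (Stdlib pow: x^0 = 1) *)
Definition monom (d : nat) (x : vec) (v : cplx) : R :=
  prodR d (fun i => x i ^ v i).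

Definition cnorm (d : nat) (v : cplx) : nat := sumN d v.

Definition drift (d m : nat) (nu nu' : nat -> cplx) (kappa : nat -> R)
  (x : vec) : vec :=
  fun i => sumR m (fun k => kappa k * monom d x (nu k)
                              * (INR (nu' k i) - INR (nu k i))).

Definition in_stoich (d m : nat) (nu nu' : nat -> cplx) (y : vec) : Prop :=
  exists a : nat -> R, forall i, (i < d)%nat ->
    y i = sumR m (fun k => a k * (INR (nu' k i) - INR (nu k i))).

Definition pos_vec (d : nat) (x : vec) : Prop :=
  forall i, (i < d)%nat -> 0 < x i.

Fixpoint cplx_eqb (d : nat) (z w : cplx) : bool :=
  match d with
  | O => true
  | S d' => Nat.eqb (z d') (w d') && cplx_eqb d' z w
  end.

Definition complex_balanced (d m : nat) (nu nu' : nat -> cplx)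
  (kappa : nat -> R) (c : vec) : Prop :=
  pos_vec d c /\
  (forall i, (i < d)%nat -> drift d m nu nu' kappa c i = 0) /\
  (forall z : cplx,
     sumR m (fun k => if cplx_eqb d (nu' k) z then kappa k * monom d c (nu k) else 0)
     = sumR m (fun k => if cplx_eqb d (nu k) z then kappa k * monom d c (nu k) else 0)).

Definition lyap (d : nat) (c x : vec) : R :=
  sumR d (fun i => x i * (ln (x i) - ln (c i) - 1) + c i).

Definition poisson (d : nat) (Vol : R) (c : vec) (x : cplx) : R :=
  prodR d (fun i => (Vol * c i) ^ (x i) / INR (fact (x i)) * exp (- (Vol * c i))).

Definition kappaV (d : nat) (kappa : nat -> R) (nu : nat -> cplx) (Vol : R)
  : nat -> R :=
  fun k => kappa k / powerRZ Vol (Z.of_nat (cnorm d (nu k)) - 1)%Z.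

Definition ffact_ind (xi ni : nat) : R :=
  if Nat.leb ni xi then INR (fact xi) / INR (fact (xi - ni)) else 0.

Definition intensity (d : nat) (kV : nat -> R) (nu : nat -> cplx) (k : nat)
  (x : cplx) : R :=
  kV k * prodR d (fun i => ffact_ind (x i) (nu k i)).

(* states of the chain: elements of Z^d_{>=0}, padded with zeros beyond d *)
Definition is_state (d : nat) (x : cplx) : Prop :=
  forall i, (d <= i)%nat -> x i = 0%nat.

Definition jump (d : nat) (nu nu' : nat -> cplx) (k : nat) (x : cplx) : cplx :=
  fun i => if Nat.ltb i d then (x i + nu' k i - nu k i)%nat else 0%nat.

Definition step (d m : nat) (nu nu' : nat -> cplx) (kV : nat -> R)
  (x y : cplx) : Prop :=
  exists k, (k < m)%nat /\ 0 < intensity d kV nu k x /\ y = jump d nu nu' k x.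

Definition closed_irred_component (d m : nat) (nu nu' : nat -> cplx)
  (kV : nat -> R) (G : cplx -> Prop) : Prop :=
  (exists x, G x) /\
  (forall x, G x -> is_state d x) /\
  (forall x y, G x -> step d m nu nu' kV x y -> G y) /\
  (forall x y, G x -> G y -> clos_refl_trans cplx (step d m nu nu' kV) x y).

(* finite partial sums of pi^V over G; the normalizing constant
   Z = sum_{x in G} pi^V(x) is their least upper bound (nonnegative terms) *)
Definition finite_partial_sums (d : nat) (Vol : R) (c : vec) (G : cplx -> Prop)
  : R -> Prop :=
  fun r => exists l : list cplx, NoDup l /\ (forall x, In x l -> G x) /\
    r = fold_right (fun x acc => poisson d Vol c x + acc) 0 l.

Definition normalizer (d : nat) (Vol : R) (c : vec) (G : cplx -> Prop) (Z : R)
  : Prop := is_lub (finite_partial_sums d Vol c G) Z.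

Definition upd (x : vec) (i : nat) (t : R) : vec :=
  fun j => if Nat.eqb j i then t else x j.

(* Main.v *)
Require Import Defs.
From Stdlib Require Import Reals List Relations.
From Stdlib Require Import Lra Lia FunctionalExtensionality Factorial ZArith.
Open Scope R_scope.

Lemma sumR_ext n f g : (forall i, (i < n)%nat -> f i = g i) -> sumR n f = sumR n g.
Proof. induction n; simpl; intros H; auto. rewrite IHn by (intros; apply H; lia). rewrite H by lia; auto. Qed.

Lemma prodR_ext n f g : (forall i, (i < n)%nat -> f i = g i) -> prodR n f = prodR n g.
Proof. induction n; simpl; intros H; auto. rewrite IHn by (intros; apply H; lia). rewrite H by lia; auto. Qed.

Lemma sumR_plus n f g : sumR n (fun i => f i + g i) = sumR n f + sumR n g.
Proof. induction n; simpl; lra. Qed.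

Lemma sumR_minus n f g : sumR n (fun i => f i - g i) = sumR n f - sumR n g.
Proof. induction n; simpl; lra. Qed.

Lemma sumR_scal n a f : sumR n (fun i => a * f i) = a * sumR n f.
Proof. induction n; simpl. ring. rewrite IHn; ring. Qed.

Lemma sumR_zero n f : (forall i, (i < n)%nat -> f i = 0) -> sumR n f = 0.
Proof. induction n; simpl; intros H; auto. rewrite IHn by (intros; apply H; lia). rewrite H by lia. ring. Qed.

Lemma sumR_swap n p (f : nat -> nat -> R) :
  sumR n (fun i => sumR p (fun k => f i k)) = sumR p (fun k => sumR n (fun i => f i k)).
Proof. induction n; simpl.
- rewrite sumR_zero; auto.
- rewrite IHn. rewrite <- sumR_plus. auto. Qed.

Lemma sumR_le n f g : (forall i, (i < n)%nat -> f i <= g i) -> sumR n f <= sumR n g.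
Proof. induction n; simpl; intros H; try lra. assert (f n <= g n) by (apply H; lia).
 assert (sumR n f <= sumR n g) by (apply IHn; intros; apply H; lia). lra. Qed.

Lemma sumR_nonneg n f : (forall i, (i < n)%nat -> 0 <= f i) -> 0 <= sumR n f.
Proof. intros H. rewrite <- (sumR_zero n (fun _ => 0)) by auto. apply sumR_le; auto. Qed.

Lemma sumR_pos n f i0 : (forall i, (i < n)%nat -> 0 <= f i) -> (i0 < n)%nat -> 0 < f i0 -> 0 < sumR n f.
Proof. induction n; simpl; intros H Hi Hp; try lia.
 assert (0 <= f n) by (apply H; lia).
 destruct (Nat.eq_dec i0 n).
 - subst. assert (0 <= sumR n f) by (apply sumR_nonneg; intros; apply H; lia). lra.
 - assert (0 < sumR n f) by (apply IHn; auto; lia). lra. Qed.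

Lemma sumR_zero_inv n f : (forall i, (i < n)%nat -> 0 <= f i) -> sumR n f = 0 -> forall i, (i < n)%nat -> f i = 0.
Proof. intros H S i Hi. destruct (Rle_lt_or_eq_dec 0 (f i) (H i Hi)) as [h|h]; auto.
 pose proof (sumR_pos n f i H Hi h). lra. Qed.

Lemma prodR_pos n f : (forall i, (i < n)%nat -> 0 < f i) -> 0 < prodR n f.
Proof. induction n; simpl; intros H; try lra. apply Rmult_lt_0_compat; auto. Qed.

Lemma prodR_mult n f g : prodR n (fun i => f i * g i) = prodR n f * prodR n g.
Proof. induction n; simpl; try ring. rewrite IHn; ring. Qed.

Lemma prodR_exp n f : prodR n (fun i => exp (f i)) = exp (sumR n f).
Proof. induction n; simpl. now rewrite exp_0. rewrite IHn, exp_plus; auto. Qed.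

Lemma ln_prodR n f : (forall i, (i < n)%nat -> 0 < f i) -> ln (prodR n f) = sumR n (fun i => ln (f i)).
Proof. induction n; simpl; intros H. apply ln_1.
 rewrite ln_mult. rewrite IHn; auto. apply prodR_pos; auto. apply H; lia. Qed.

Lemma ln_le_minus1 y : 0 < y -> ln y <= y - 1.
Proof. intros. pose proof (exp_ineq1_le (ln y)). rewrite exp_ln in H0; lra. Qed.

Lemma ln_lt_minus1 y : 0 < y -> y <> 1 -> ln y < y - 1.
Proof. intros. assert (ln y <> 0). { apply ln_neq_0; auto. }
 pose proof (exp_ineq1 (ln y) H1). rewrite exp_ln in H2; lra. Qed.

Lemma ln_div a b : 0 < a -> 0 < b -> ln (a / b) = ln a - ln b.
Proof. intros. unfold Rdiv. rewrite ln_mult, ln_Rinv; auto. apply Rinv_0_lt_compat; auto. Qed.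

Lemma Rdiv_le_0_compat a b : 0 <= a -> 0 < b -> 0 <= a / b.
Proof. intros. unfold Rdiv. apply Rmult_le_pos; auto. left; apply Rinv_0_lt_compat; auto. Qed.

Lemma cplx_eqb_spec d z w : cplx_eqb d z w = true <-> (forall i, (i < d)%nat -> z i = w i).
Proof. induction d; simpl. split; intros; auto; lia.
 rewrite Bool.andb_true_iff, Nat.eqb_eq, IHd. split.
 - intros [H1 H2] i Hi. destruct (Nat.eq_dec i d). subst; auto. apply H2; lia.
 - intros H. split. apply H; lia. intros; apply H; lia. Qed.

Section CB.
Variable d : nat.
Definition sumL (g : cplx -> R) (L : list (cplx * R)) : R :=
  fold_right (fun p acc => snd p * g (fst p) + acc) 0 L.
Definition indL (z : cplx) (L : list (cplx * R)) : R :=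
  fold_right (fun p acc => (if cplx_eqb d (fst p) z then snd p else 0) + acc) 0 L.

Lemma indL_split z0 z L :
  indL z L = indL z (filter (fun p => cplx_eqb d (fst p) z0) L) +
             indL z (filter (fun p => negb (cplx_eqb d (fst p) z0)) L).
Proof. induction L as [|[w b] L IH]; simpl; [lra|].
 destruct (cplx_eqb d w z0) eqn:E; simpl; rewrite IH; lra. Qed.

Lemma indL_filter_other z0 z L : cplx_eqb d z0 z = false ->
  indL z (filter (fun p => cplx_eqb d (fst p) z0) L) = 0.
Proof. intros Hz. induction L as [|[w b] L IH]; simpl; [lra|].
 destruct (cplx_eqb d w z0) eqn:E; simpl; rewrite ?IH; try lra.
 destruct (cplx_eqb d w z) eqn:E2; [|lra]. exfalso.
 rewrite cplx_eqb_spec in E, E2. assert (forall i, (i<d)%nat -> z0 i = z i).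
 { intros i Hi. rewrite <- (E i Hi); auto. }
 rewrite <- cplx_eqb_spec in H. congruence. Qed.

Lemma indL_filter_same z0 L :
  indL z0 (filter (fun p => cplx_eqb d (fst p) z0) L) = fold_right (fun p acc => snd p + acc) 0 (filter (fun p => cplx_eqb d (fst p) z0) L).
Proof. induction L as [|[w b] L IH]; simpl; [lra|].
 destruct (cplx_eqb d w z0) eqn:E; simpl; rewrite ?E; lra. Qed.

Lemma sumL_filter_same g z0 L : (forall z w, cplx_eqb d z w = true -> g z = g w) ->
  sumL g (filter (fun p => cplx_eqb d (fst p) z0) L) = g z0 * fold_right (fun p acc => snd p + acc) 0 (filter (fun p => cplx_eqb d (fst p) z0) L).
Proof. intros Hg. induction L as [|[w b] L IH]; simpl; [lra|].
 destruct (cplx_eqb d w z0) eqn:E; simpl; rewrite ?IH; try lra. rewrite (Hg _ _ E). ring. Qed.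

Lemma sumL_split g z0 L : sumL g L = sumL g (filter (fun p => cplx_eqb d (fst p) z0) L) + sumL g (filter (fun p => negb (cplx_eqb d (fst p) z0)) L).
Proof. induction L as [|[w b] L IH]; simpl; [lra|].
 destruct (cplx_eqb d w z0); simpl; rewrite IH; lra. Qed.

Lemma cplx_eqb_refl z : cplx_eqb d z z = true.
Proof. apply cplx_eqb_spec; auto. Qed.

Lemma sumL_zero g : (forall z w, cplx_eqb d z w = true -> g z = g w) ->
  forall n L, (length L <= n)%nat -> (forall z, indL z L = 0) -> sumL g L = 0.
Proof. intros Hg n. induction n; intros L HL HI.
 - destruct L; simpl in *; [lra|lia].
 - destruct L as [|[z0 b0] L]; simpl; [lra|].
   rewrite (sumL_split g z0 L), (sumL_filter_same g z0 L Hg).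
   assert (H0 : b0 + fold_right (fun p acc => snd p + acc) 0 (filter (fun p => cplx_eqb d (fst p) z0) L) = 0).
   { specialize (HI z0). simpl in HI. rewrite cplx_eqb_refl in HI.
     rewrite (indL_split z0 z0 L) in HI.
     rewrite indL_filter_same in HI.
     assert (indL z0 (filter (fun p => negb (cplx_eqb d (fst p) z0)) L) = 0).
     { clear. induction L as [|[w b] L IH]; simpl; [lra|].
       destruct (cplx_eqb d w z0) eqn:E; simpl; rewrite ?E; simpl; lra. }
     simpl in HI. lra. }
   assert (Hrest : sumL g (filter (fun p => negb (cplx_eqb d (fst p) z0)) L) = 0).
   { apply IHn.
     - simpl in HL. pose proof (filter_length_le (fun p => negb (cplx_eqb d (fst p) z0)) L). lia.
     - intros z. specialize (HI z). simpl in HI.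
       destruct (cplx_eqb d z0 z) eqn:E.
       + rewrite (indL_split z0 z L) in HI.
         assert (indL z (filter (fun p => cplx_eqb d (fst p) z0) L) = indL z0 (filter (fun p => cplx_eqb d (fst p) z0) L)).
         { clear -E. induction L as [|[w b] L IH]; simpl; [lra|].
           destruct (cplx_eqb d w z0) eqn:E1; simpl; rewrite ?IH, ?E1; try lra.
           replace (cplx_eqb d w z) with true; auto. symmetry.
           rewrite cplx_eqb_spec in *. intros i Hi. rewrite E1, E; auto. }
         rewrite H, indL_filter_same in HI. lra.
       + rewrite (indL_split z0 z L), (indL_filter_other z0 z L E) in HI. lra. }
   rewrite Hrest. ring_simplify. replace (b0 * g z0 + g z0 * fold_right (fun p acc => snd p + acc) 0 (filter (fun p => cplx_eqb d (fst p) z0) L)) with (g z0 * (b0 + fold_right (fun p acc => snd p + acc) 0 (filter (fun p => cplx_eqb d (fst p) z0) L))) by ring. rewrite H0. ring.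
Qed.
End CB.

Fixpoint buildL (zs zt : nat -> cplx) (a : nat -> R) (m : nat) : list (cplx * R) :=
  match m with O => nil | S m' => (zt m', a m') :: (zs m', - a m') :: buildL zs zt a m' end.

Lemma cb_sum d m (a : nat -> R) (zs zt : nat -> cplx) (g : cplx -> R) :
  (forall z, sumR m (fun k => if cplx_eqb d (zt k) z then a k else 0)
           = sumR m (fun k => if cplx_eqb d (zs k) z then a k else 0)) ->
  (forall z w, cplx_eqb d z w = true -> g z = g w) ->
  sumR m (fun k => a k * g (zt k)) = sumR m (fun k => a k * g (zs k)).
Proof. intros H Hg.
 assert (E1 : sumL g (buildL zs zt a m) = sumR m (fun k => a k * g (zt k)) - sumR m (fun k => a k * g (zs k))).
 { clear. induction m; simpl; [lra|]. unfold sumL in *. simpl. rewrite IHm. ring. }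
 assert (E2 : forall z, indL d z (buildL zs zt a m) = sumR m (fun k => if cplx_eqb d (zt k) z then a k else 0) - sumR m (fun k => if cplx_eqb d (zs k) z then a k else 0)).
 { clear. intros z. induction m; simpl; [lra|]. unfold indL in *. simpl. rewrite IHm.
   destruct (cplx_eqb d (zt m) z), (cplx_eqb d (zs m) z); ring. }
 assert (sumL g (buildL zs zt a m) = 0).
 { apply (sumL_zero d g Hg (length (buildL zs zt a m))); auto. intros z. rewrite E2, H. ring. }
 lra. Qed.

Lemma term_nonneg x c : 0 < x -> 0 < c -> 0 <= x * (ln x - ln c - 1) + c.
Proof. intros. pose proof (ln_le_minus1 (c / x)).
 rewrite ln_div in H1 by auto. assert (0 < c / x) by (apply Rdiv_lt_0_compat; auto).
 specialize (H1 H2). apply Rmult_le_compat_l with (r := x) in H1; [|lra].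
 replace (x * (c / x - 1)) with (c - x) in H1 by (field; lra). nra. Qed.

Lemma term_pos x c : 0 < x -> 0 < c -> x <> c -> 0 < x * (ln x - ln c - 1) + c.
Proof. intros. assert (0 < c / x) by (apply Rdiv_lt_0_compat; auto).
 assert (c / x <> 1). { intro E. apply H1. assert (c = c / x * x) by (field; lra). rewrite E in H3. lra. }
 pose proof (ln_lt_minus1 (c / x) H2 H3).
 rewrite ln_div in H4 by auto.
 apply Rmult_lt_compat_l with (r := x) in H4; [|lra].
 replace (x * (c / x - 1)) with (c - x) in H4 by (field; lra). nra. Qed.

Lemma lyap_cc d c : pos_vec d c -> lyap d c c = 0.
Proof. intros. unfold lyap. apply sumR_zero. intros. ring. Qed.

Lemma lyap_pos d c x : pos_vec d c -> pos_vec d x -> (exists i, (i < d)%nat /\ x i <> c i) -> 0 < lyap d c x.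
Proof. intros Hc Hx [i [Hi Hne]]. unfold lyap.
 apply (sumR_pos d _ i); auto. intros; apply term_nonneg; auto. apply term_pos; auto. Qed.

Lemma lyap_nonneg d c x : pos_vec d c -> pos_vec d x -> 0 <= lyap d c x.
Proof. intros. apply sumR_nonneg; intros; apply term_nonneg; auto. Qed.

Lemma deriv_sumR n (F : nat -> R -> R) (D : nat -> R) x0 :
  (forall j, (j < n)%nat -> derivable_pt_lim (F j) x0 (D j)) ->
  derivable_pt_lim (fun t => sumR n (fun j => F j t)) x0 (sumR n D).
Proof. induction n; intros H; simpl.
 - apply derivable_pt_lim_const.
 - apply (derivable_pt_lim_plus (fun t => sumR n (fun j => F j t)) (F n)).
   apply IHn; intros; apply H; lia. apply H; lia. Qed.

Lemma sumR_single n i D : (i < n)%nat -> sumR n (fun j => if Nat.eqb j i then D else 0) = D.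
Proof. induction n; intros H; simpl; [lia|].
 destruct (Nat.eq_dec i n).
 - subst. rewrite Nat.eqb_refl. rewrite sumR_zero. ring. intros j Hj.
   destruct (Nat.eqb_spec j n); [lia|auto].
 - rewrite IHn by lia. destruct (Nat.eqb_spec n i); [lia|ring]. Qed.

Lemma deriv_lyap d c x i : pos_vec d x -> (i < d)%nat ->
  derivable_pt_lim (fun t => lyap d c (upd x i t)) (x i) (ln (x i) - ln (c i)).
Proof. intros Hx Hi. unfold lyap.
 rewrite <- (sumR_single d i (ln (x i) - ln (c i)) Hi).
 apply (deriv_sumR d (fun j t => upd x i t j * (ln (upd x i t j) - ln (c j) - 1) + c j)).
 intros j Hj. unfold upd. destruct (Nat.eqb_spec j i).
 - subst j. assert (0 < x i) by (apply Hx; auto).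
   replace (ln (x i) - ln (c i)) with ((1 * (ln (x i) - ln (c i) - 1) + x i * (/ x i - 0 - 0)) + 0) by (field; lra).
   apply (derivable_pt_lim_plus (fun t => t * (ln t - ln (c i) - 1)) (fun _ => c i)).
   apply (derivable_pt_lim_mult id (fun t => ln t - ln (c i) - 1)).
   apply derivable_pt_lim_id.
   apply (derivable_pt_lim_minus (fun t => ln t - ln (c i)) (fun _ => 1)).
   apply (derivable_pt_lim_minus ln (fun _ => ln (c i))).
   apply derivable_pt_lim_ln; auto. apply derivable_pt_lim_const. apply derivable_pt_lim_const.
   apply derivable_pt_lim_const.
 - apply derivable_pt_lim_const. Qed.

Lemma exp_pow_INR n y : exp y ^ n = exp (INR n * y).
Proof. induction n; simpl. rewrite Rmult_0_l, exp_0; auto.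
 rewrite IHn. rewrite <- exp_plus. f_equal. destruct n; simpl; ring. Qed.

Lemma monom_exp d x c v : pos_vec d x -> pos_vec d c ->
  monom d x v = monom d c v * exp (sumR d (fun i => INR (v i) * (ln (x i) - ln (c i)))).
Proof. intros Hx Hc. unfold monom. rewrite <- prodR_exp, <- prodR_mult.
 apply prodR_ext. intros i Hi. rewrite <- exp_pow_INR, <- Rpow_mult_distr. f_equal.
 assert (0 < x i) by (apply Hx; auto). assert (0 < c i) by (apply Hc; auto).
 unfold Rminus. rewrite exp_plus, exp_Ropp, !exp_ln by auto. field. lra. Qed.

Lemma key_ineq A B : exp A * (B - A) <= exp B - exp A.
Proof. pose proof (exp_ineq1_le (B - A)). replace (exp B) with (exp A * exp (B - A)).
 pose proof (exp_pos A). nra. rewrite <- exp_plus. f_equal; ring. Qed.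

Lemma key_strict A B : A <> B -> exp A * (B - A) < exp B - exp A.
Proof. intros. assert (B - A <> 0) by lra. pose proof (exp_ineq1 (B - A) H0). replace (exp B) with (exp A * exp (B - A)).
 pose proof (exp_pos A). nra. rewrite <- exp_plus. f_equal; ring. Qed.

Section Main.
Variables (d m : nat) (nu nu' : nat -> cplx) (kappa : nat -> R) (c x : vec).
Hypothesis Hk : forall k, (k < m)%nat -> 0 < kappa k.
Hypothesis Hcb : complex_balanced d m nu nu' kappa c.
Hypothesis Hx : pos_vec d x.

Let g i := ln (x i) - ln (c i).
Let A k := sumR d (fun i => INR (nu k i) * g i).
Let B k := sumR d (fun i => INR (nu' k i) * g i).
Let w k := kappa k * monom d c (nu k).

Lemma Hc : pos_vec d c. Proof. destruct Hcb; auto. Qed.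

Lemma w_pos k : (k < m)%nat -> 0 < w k.
Proof. intros. unfold w. apply Rmult_lt_0_compat. auto. apply prodR_pos. intros.
 apply pow_lt. apply Hc; auto. Qed.

Lemma S_eq : sumR d (fun i => g i * drift d m nu nu' kappa x i) = sumR m (fun k => w k * exp (A k) * (B k - A k)).
Proof. unfold drift.
 rewrite (sumR_ext d _ (fun i => sumR m (fun k => g i * (kappa k * monom d x (nu k) * (INR (nu' k i) - INR (nu k i)))))).
 2:{ intros. rewrite <- sumR_scal. auto. }
 rewrite sumR_swap. apply sumR_ext. intros k Hkm.
 rewrite (sumR_ext d _ (fun i => kappa k * monom d x (nu k) * (INR (nu' k i) * g i - INR (nu k i) * g i))) by (intros; ring).
 rewrite sumR_scal, sumR_minus. unfold w, A, B, g. rewrite (monom_exp d x c (nu k) Hx Hc). ring. Qed.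

Lemma cb_exp : sumR m (fun k => w k * exp (B k)) = sumR m (fun k => w k * exp (A k)).
Proof. destruct Hcb as [_ [_ H3]].
 apply (cb_sum d m w nu nu' (fun z => exp (sumR d (fun i => INR (z i) * g i)))).
 - intros z. apply H3.
 - intros z z' E. rewrite cplx_eqb_spec in E. f_equal. apply sumR_ext. intros i Hi. rewrite E; auto. Qed.

Lemma S_le : sumR d (fun i => g i * drift d m nu nu' kappa x i) <= 0.
Proof. rewrite S_eq. apply Rle_trans with (sumR m (fun k => w k * exp (B k) - w k * exp (A k))).
 - apply sumR_le. intros k Hkm. pose proof (key_ineq (A k) (B k)). pose proof (w_pos k Hkm). nra.
 - rewrite sumR_minus, cb_exp. lra. Qed.

Lemma S_eq0_AB : sumR d (fun i => g i * drift d m nu nu' kappa x i) = 0 -> forall k, (k < m)%nat -> A k = B k.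
Proof. intros H0. rewrite S_eq in H0.
 assert (E : sumR m (fun k => (w k * exp (B k) - w k * exp (A k)) - w k * exp (A k) * (B k - A k)) = 0).
 { rewrite sumR_minus, sumR_minus, cb_exp, H0. ring. }
 intros k Hkm. destruct (Req_dec (A k) (B k)); auto. exfalso.
 assert (0 < (w k * exp (B k) - w k * exp (A k)) - w k * exp (A k) * (B k - A k)).
 { pose proof (key_strict _ _ H). pose proof (w_pos k Hkm). nra. }
 assert (0 < sumR m (fun k => (w k * exp (B k) - w k * exp (A k)) - w k * exp (A k) * (B k - A k))).
 { apply (sumR_pos m _ k); auto. intros j Hj. pose proof (key_ineq (A j) (B j)). pose proof (w_pos j Hj). nra. }
 lra. Qed.

Hypothesis Hst : in_stoich d m nu nu' (fun i => x i - c i).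

Lemma S_eq0_iff : sumR d (fun i => g i * drift d m nu nu' kappa x i) = 0 <-> forall i, (i < d)%nat -> x i = c i.
Proof. split.
 - intros H0. pose proof (S_eq0_AB H0) as HAB. destruct Hst as [a Ha].
   assert (E : sumR d (fun i => (x i - c i) * g i) = 0).
   { rewrite (sumR_ext d _ (fun i => sumR m (fun k => a k * (INR (nu' k i) * g i - INR (nu k i) * g i)))).
     2:{ intros i Hi. rewrite Ha by auto. rewrite Rmult_comm, <- sumR_scal. apply sumR_ext. intros; ring. }
     rewrite sumR_swap. apply sumR_zero. intros k Hkm. rewrite sumR_scal, sumR_minus.
     fold (B k). fold (A k). rewrite (HAB k Hkm). ring. }
   assert (Hnn : forall i, (i < d)%nat -> 0 <= (x i - c i) * g i).
   { intros i Hi. unfold g. pose proof (Hx i Hi). pose proof (Hc i Hi).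
     destruct (Rtotal_order (x i) (c i)) as [h|[h|h]].
     - pose proof (ln_increasing _ _ H h). nra.
     - rewrite h. lra.
     - pose proof (ln_increasing _ _ H1 h). nra. }
   intros i Hi. pose proof (sumR_zero_inv d _ Hnn E i Hi). unfold g in H.
   pose proof (Hx i Hi). pose proof (Hc i Hi).
   destruct (Rtotal_order (x i) (c i)) as [h|[h|h]]; auto; exfalso.
   + pose proof (ln_increasing _ _ H1 h). nra.
   + pose proof (ln_increasing _ _ H2 h). nra.
 - intros H. apply sumR_zero. intros i Hi. unfold g. rewrite H by auto. ring. Qed.
End Main.

Lemma partC d m nu nu' kappa c :
  (forall k, (k < m)%nat -> 0 < kappa k) ->
  complex_balanced d m nu nu' kappa c ->
  lyap d c c = 0 /\
  (forall x : vec, pos_vec d x -> in_stoich d m nu nu' (fun i => x i - c i) ->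
     (exists i, (i < d)%nat /\ x i <> c i) -> 0 < lyap d c x) /\
  (forall x : vec, pos_vec d x -> in_stoich d m nu nu' (fun i => x i - c i) ->
     exists g : vec,
       (forall i, (i < d)%nat ->
          derivable_pt_lim (fun t => lyap d c (upd x i t)) (x i) (g i)) /\
       sumR d (fun i => g i * drift d m nu nu' kappa x i) <= 0 /\
       (sumR d (fun i => g i * drift d m nu nu' kappa x i) = 0 <->
        forall i, (i < d)%nat -> x i = c i)).
Proof. intros Hk Hcb. pose proof (Hc d m nu nu' kappa c Hcb) as Hc'. split; [|split].
 - apply lyap_cc; auto.
 - intros. apply lyap_pos; auto.
 - intros x Hx Hst. exists (fun i => ln (x i) - ln (c i)). split; [|split].
   + intros; apply deriv_lyap; auto.
   + apply (S_le d m nu nu' kappa c x Hk Hcb Hx).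
   + apply (S_eq0_iff d m nu nu' kappa c x Hk Hcb Hx Hst). Qed.

Definition ev (P : nat -> Prop) := exists N, forall n, (N <= n)%nat -> P n.

Lemma ev_and P Q : ev P -> ev Q -> ev (fun n => P n /\ Q n).
Proof. intros [N1 H1] [N2 H2]. exists (max N1 N2). intros; split; [apply H1|apply H2]; lia. Qed.

Lemma ev_mono (P Q : nat -> Prop) : (forall n, P n -> Q n) -> ev P -> ev Q.
Proof. intros H [N HN]. exists N; auto. Qed.

Lemma ev_forall_lt d (P : nat -> nat -> Prop) : (forall i, (i < d)%nat -> ev (P i)) -> ev (fun n => forall i, (i < d)%nat -> P i n).
Proof. induction d; intros H. exists O; intros; lia.
 destruct (IHd (fun i Hi => H i (Nat.lt_lt_succ_r _ _ Hi))) as [N1 H1].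
 destruct (H d (Nat.lt_succ_diag_r d)) as [N2 H2]. exists (max N1 N2). intros n Hn i Hi.
 destruct (Nat.eq_dec i d). subst; apply H2; lia. apply H1; lia. Qed.

Lemma Un_cv_ev u v l : ev (fun n => u n = v n) -> Un_cv v l -> Un_cv u l.
Proof. intros [N HN] H eps He. destruct (H eps He) as [N2 H2]. exists (max N N2). intros n Hn.
 rewrite HN by lia. apply H2; lia. Qed.

Lemma squeeze a u b l : ev (fun n => a n <= u n <= b n) -> Un_cv a l -> Un_cv b l -> Un_cv u l.
Proof. intros [N HN] Ha Hb eps He. destruct (Ha eps He) as [N1 H1]. destruct (Hb eps He) as [N2 H2].
 exists (max N (max N1 N2)). intros n Hn. specialize (HN n ltac:(lia)). specialize (H1 n ltac:(lia)). specialize (H2 n ltac:(lia)).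
 unfold Rdist in *. apply Rabs_def2 in H1. apply Rabs_def2 in H2. apply Rabs_def1; lra. Qed.

Lemma cv_const l : Un_cv (fun _ => l) l.
Proof. intros eps He. exists O. intros. unfold Rdist. rewrite Rminus_diag, Rabs_R0. lra. Qed.

Lemma CV_sumR d (u : nat -> nat -> R) (l : nat -> R) :
  (forall i, (i < d)%nat -> Un_cv (u i) (l i)) -> Un_cv (fun n => sumR d (fun i => u i n)) (sumR d l).
Proof. induction d; intros H; simpl. apply cv_const.
 apply (CV_plus (fun n => sumR d (fun i => u i n)) (u d)). apply IHd; intros; apply H; lia. apply H; lia. Qed.

Lemma ev_cv_pos u l : Un_cv u l -> 0 < l -> ev (fun n => l / 2 < u n).
Proof. intros H Hl. destruct (H (l/2) ltac:(lra)) as [N HN]. exists N. intros n Hn.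
 specialize (HN n Hn). unfold Rdist in HN. apply Rabs_def2 in HN. lra. Qed.

Section Seq.
Variable V : nat -> R.
Hypothesis Vpos : forall n, 0 < V n.
Hypothesis Vinf : forall M, exists N, forall n, (N <= n)%nat -> M < V n.

Lemma ev_V_ge M : ev (fun n => M <= V n).
Proof. destruct (Vinf M) as [N HN]. exists N. intros n Hn. specialize (HN n Hn). lra. Qed.

Lemma cv_invV : Un_cv (fun n => / V n) 0.
Proof. intros eps He. destruct (Vinf (/ eps)) as [N HN]. exists N. intros n Hn. specialize (HN n Hn).
 unfold Rdist. rewrite Rminus_0_r. pose proof (Vpos n). rewrite Rabs_right.
 2:{ left. apply Rinv_0_lt_compat; auto. }
 apply Rinv_lt_contravar in HN. rewrite Rinv_inv in HN. auto. apply Rmult_lt_0_compat; auto. apply Rinv_0_lt_compat; auto. Qed.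

Lemma ln_le_2sqrt y : 0 < y -> ln y <= 2 * sqrt y.
Proof. intros. pose proof (sqrt_lt_R0 y H). pose proof (sqrt_sqrt y ltac:(lra)).
 assert (ln y = 2 * ln (sqrt y)). { rewrite <- H1 at 1. rewrite ln_mult by auto. ring. }
 pose proof (ln_le_minus1 (sqrt y) H0). lra. Qed.

Lemma cv_lnV : Un_cv (fun n => ln (V n) / V n) 0.
Proof. intros eps He. destruct (Vinf (Rmax 1 (4 / (eps * eps)))) as [N HN]. exists N. intros n Hn. specialize (HN n Hn).
 pose proof (Rmax_l 1 (4 / (eps * eps))). pose proof (Rmax_r 1 (4 / (eps * eps))).
 set (v := V n) in *. assert (Hv1: 1 < v) by lra. assert (H3: 0 < v) by lra.
 assert (Hl0 : 0 <= ln v) by (rewrite <- ln_1; left; apply ln_increasing; lra).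
 unfold Rdist. rewrite Rminus_0_r. rewrite Rabs_right. 2:{ apply Rle_ge. apply Rmult_le_pos; auto. left; apply Rinv_0_lt_compat; auto. }
 pose proof (ln_le_2sqrt v H3) as H5. pose proof (sqrt_lt_R0 v H3) as H6. pose proof (sqrt_sqrt v ltac:(lra)) as H7.
 assert (2 / eps < sqrt v).
 { apply Rsqr_incrst_0; try lra. 2:{ apply Rlt_le. apply Rdiv_lt_0_compat; lra. }
   unfold Rsqr. rewrite H7. replace (2 / eps * (2 / eps)) with (4 / (eps * eps)) by (field; lra). lra. }
 apply Rle_lt_trans with (2 * sqrt v / v).
 - unfold Rdiv. apply Rmult_le_compat_r; auto. left; apply Rinv_0_lt_compat; auto.
 - replace (2 * sqrt v / v) with (2 / sqrt v) by (assert (Hq: v = sqrt v * sqrt v) by lra; unfold Rdiv; rewrite Hq at 3; field; lra).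
   apply (Rmult_lt_reg_r (sqrt v)); auto. replace (2 / sqrt v * sqrt v) with 2 by (field; lra).
   apply (Rmult_lt_reg_l (/ eps)). apply Rinv_0_lt_compat; auto.
   replace (/ eps * 2) with (2 / eps) by (field; lra). replace (/ eps * (eps * sqrt v)) with (sqrt v) by (field; lra). auto. Qed.
End Seq.

Lemma ln_le a b : 0 < a -> a <= b -> ln a <= ln b.
Proof. intros. destruct H0. left; apply ln_increasing; auto. subst; lra. Qed.

Lemma L1 n : INR n * (ln (INR n + 1) - ln (INR n)) <= 1.
Proof. destruct n. simpl. lra. pose proof (lt_0_INR (S n) ltac:(lia)). set (a := INR (S n)) in *.
 rewrite <- ln_div by lra. pose proof (ln_le_minus1 ((a+1)/a) ltac:(apply Rdiv_lt_0_compat; lra)).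
 replace ((a + 1) / a - 1) with (/ a) in H0 by (field; lra).
 apply Rmult_le_compat_l with (r := a) in H0; [|lra]. rewrite Rinv_r in H0; lra. Qed.

Lemma lnfact_lower n : INR n * ln (INR n) - INR n <= ln (INR (fact n)).
Proof. induction n. simpl. rewrite ln_1. lra.
 rewrite fact_simpl, mult_INR, ln_mult by (try apply INR_fact_lt_0; apply lt_0_INR; lia).
 rewrite S_INR. pose proof (L1 n). nra. Qed.

Lemma lnfact_upper n : ln (INR (fact n)) <= (INR n + 1) * ln (INR n + 1) - INR n.
Proof. induction n. simpl. replace (0+1) with 1 by ring. rewrite ln_1. lra.
 rewrite fact_simpl, mult_INR, ln_mult by (try apply INR_fact_lt_0; apply lt_0_INR; lia).
 rewrite S_INR. pose proof (pos_INR n). set (a := INR n) in *.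
 assert (1 <= (a + 1 + 1) * (ln (a + 1 + 1) - ln (a + 1))).
 { rewrite <- ln_div by lra. pose proof (ln_le_minus1 ((a+1)/(a+1+1)) ltac:(apply Rdiv_lt_0_compat; lra)).
   rewrite ln_div in H0 by lra. rewrite ln_div by lra.
   replace ((a + 1) / (a + 1 + 1) - 1) with (- / (a+1+1)) in H0 by (field; lra).
   assert (0 < a + 1 + 1) by lra. apply Rmult_le_compat_l with (r := a+1+1) in H0; [|lra].
   replace ((a + 1 + 1) * - / (a + 1 + 1)) with (-1) in H0 by (field; lra). nra. }
 nra. Qed.

Section Coord.
Variable V : nat -> R.
Hypothesis Vpos : forall n, 0 < V n.
Hypothesis Vinf : forall M, exists N, forall n, (N <= n)%nat -> M < V n.
Variable x : nat -> nat.
Variables y cc : R.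
Hypothesis Hy : 0 < y.
Hypothesis Hcc : 0 < cc.
Hypothesis Hx : Un_cv (fun n => INR (x n) / V n) y.

Let q n := INR (x n) / V n.
Let phi t := t * (ln t - ln cc - 1) + cc.
Let r n := ln (INR (fact (x n))) - INR (x n) * ln (INR (x n)) + INR (x n).

Lemma phi_cont : continuity_pt phi y.
Proof. apply derivable_continuous_pt. exists ((1 * (ln y - ln cc - 1) + y * (/ y - 0 - 0)) + 0).
 apply (derivable_pt_lim_plus (fun t => t * (ln t - ln cc - 1)) (fun _ => cc)).
 apply (derivable_pt_lim_mult id (fun t => ln t - ln cc - 1)).
 apply derivable_pt_lim_id.
 apply (derivable_pt_lim_minus (fun t => ln t - ln cc) (fun _ => 1)).
 apply (derivable_pt_lim_minus ln (fun _ => ln cc)).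
 apply derivable_pt_lim_ln; auto. apply derivable_pt_lim_const. apply derivable_pt_lim_const.
 apply derivable_pt_lim_const. Qed.

Lemma r_bounds n : 0 <= r n <= ln (INR (x n) + 1) + 1.
Proof. unfold r. pose proof (lnfact_lower (x n)). pose proof (lnfact_upper (x n)). pose proof (L1 (x n)). nra. Qed.

Lemma cv_rV : Un_cv (fun n => r n / V n) 0.
Proof.
 apply (squeeze (fun _ => 0) _ (fun n => ln (V n) / V n + (ln (q n + 1) + 1) * / V n)).
 - apply (ev_mono (fun n => 1 <= V n)); [|apply ev_V_ge; auto].
   intros n Hn. pose proof (r_bounds n). pose proof (Vpos n). split.
   + apply Rmult_le_pos; [lra|left; apply Rinv_0_lt_compat; auto].
   + assert (ln (INR (x n) + 1) <= ln (V n) + ln (q n + 1)).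
     { pose proof (pos_INR (x n)). assert (0 <= q n) by (unfold q; apply Rmult_le_pos; [lra| left; apply Rinv_0_lt_compat; auto]).
       rewrite <- ln_mult by lra.
       apply ln_le. lra. unfold q. replace (V n * (INR (x n) / V n + 1)) with (INR (x n) + V n) by (field; lra). lra. }
     replace (ln (V n) / V n + (ln (q n + 1) + 1) * / V n) with ((ln (V n) + ln (q n + 1) + 1) / V n) by (field; lra).
     unfold Rdiv. apply Rmult_le_compat_r. left; apply Rinv_0_lt_compat; auto. lra.
 - apply cv_const.
 - replace 0 with (0 + (ln (y + 1) + 1) * 0) by ring.
   apply CV_plus. apply cv_lnV; auto.
   apply CV_mult. apply (CV_plus (fun n => ln (q n + 1)) (fun _ => 1)).
   apply (continuity_seq ln (fun n => q n + 1)).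
   apply derivable_continuous_pt. exists (/ (y+1)). apply derivable_pt_lim_ln. lra.
   apply (CV_plus q (fun _ => 1)). apply Hx. apply cv_const. apply cv_const. apply cv_invV; auto. Qed.

Lemma coordA : Un_cv (fun n => - (/ V n) * ln ((V n * cc) ^ (x n) / INR (fact (x n)) * exp (- (V n * cc)))) (y * (ln y - ln cc - 1) + cc).
Proof.
 apply Un_cv_ev with (v := fun n => phi (q n) + r n / V n).
 - apply (ev_mono (fun n => y / 2 < q n)); [|apply ev_cv_pos; auto].
   intros n Hn. pose proof (Vpos n). assert (0 < INR (x n)).
   { unfold q in Hn. assert (0 < INR (x n) / V n) by lra. apply Rmult_lt_reg_r with (/ V n). apply Rinv_0_lt_compat; auto. lra. }
   assert (hVc : 0 < V n * cc) by nra. assert (hP : 0 < (V n * cc) ^ x n) by (apply pow_lt; auto).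
   pose proof (INR_fact_lt_0 (x n)) as hF.
   rewrite ln_mult by (try apply Rdiv_lt_0_compat; auto; apply exp_pos).
   rewrite ln_div by auto. rewrite ln_pow by auto. rewrite ln_exp. rewrite ln_mult by lra.
   unfold phi, q, r. rewrite ln_div by lra. field. lra.
 - replace (y * (ln y - ln cc - 1) + cc) with (phi y + 0) by (unfold phi; ring).
   apply CV_plus. apply (continuity_seq phi q). apply phi_cont. apply Hx. apply cv_rV. Qed.
End Coord.

Lemma poisson_pos d Vol c x : 0 < Vol -> pos_vec d c -> 0 < poisson d Vol c x.
Proof. intros. apply prodR_pos. intros i Hi. pose proof (H0 i Hi).
 apply Rmult_lt_0_compat. apply Rdiv_lt_0_compat. apply pow_lt; nra. apply INR_fact_lt_0. apply exp_pos. Qed.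

Lemma partA_gen d (V : nat -> R) (c y : vec) (Y : nat -> cplx) :
  (forall n, 0 < V n) -> (forall M, exists N, forall n, (N <= n)%nat -> M < V n) ->
  pos_vec d c -> pos_vec d y ->
  (forall i, (i < d)%nat -> Un_cv (fun n => INR (Y n i) / V n) (y i)) ->
  Un_cv (fun n => - (/ V n) * ln (poisson d (V n) c (Y n))) (lyap d c y).
Proof. intros Vpos Vinf Hc Hy HY.
 apply Un_cv_ev with (v := fun n => sumR d (fun i => - (/ V n) * ln ((V n * c i) ^ (Y n i) / INR (fact (Y n i)) * exp (- (V n * c i))))).
 - exists O. intros n _. unfold poisson. rewrite ln_prodR. rewrite <- sumR_scal. auto.
   intros i Hi. pose proof (Hc i Hi). pose proof (Vpos n).
   apply Rmult_lt_0_compat. apply Rdiv_lt_0_compat. apply pow_lt; nra. apply INR_fact_lt_0. apply exp_pos.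
 - unfold lyap. apply (CV_sumR d (fun i n => - (/ V n) * ln ((V n * c i) ^ (Y n i) / INR (fact (Y n i)) * exp (- (V n * c i))))).
   intros i Hi. apply coordA; auto. Qed.

Lemma sumR_sum_f n f : sumR (S n) f = sum_f_R0 f n.
Proof. induction n. simpl; ring. change (sumR (S (S n)) f) with (sumR (S n) f + f (S n)). rewrite IHn. simpl. auto. Qed.

Lemma exp_partial lam N : 0 <= lam -> sumR N (fun j => lam ^ j / INR (fact j)) <= exp lam.
Proof. intros Hl. destruct N. simpl. left; apply exp_pos.
 rewrite sumR_sum_f. unfold exp. destruct (exist_exp lam) as [l Hl2]. simpl.
 unfold exp_in in Hl2.
 assert (Un_cv (fun n => sum_f_R0 (fun i => / INR (fact i) * lam ^ i) n) l) by exact Hl2.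
 assert (E : sum_f_R0 (fun j => lam ^ j / INR (fact j)) N = sum_f_R0 (fun i => / INR (fact i) * lam ^ i) N).
 { apply sum_eq. intros; unfold Rdiv; ring. }
 rewrite E. apply (growing_ineq (fun n => sum_f_R0 (fun i => / INR (fact i) * lam ^ i) n)); auto.
 intros n. rewrite tech5. assert (0 <= / INR (fact (S n)) * lam ^ S n).
 { apply Rmult_le_pos. left; apply Rinv_0_lt_compat, INR_fact_lt_0. apply pow_le; auto. }
 lra. Qed.

Lemma poisson1_partial lam N : 0 <= lam -> sumR N (fun j => lam ^ j / INR (fact j) * exp (- lam)) <= 1.
Proof. intros. rewrite (sumR_ext N _ (fun j => exp (-lam) * (lam ^ j / INR (fact j)))) by (intros; ring).
 rewrite sumR_scal. pose proof (exp_partial lam N H). pose proof (exp_pos (-lam)).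
 apply Rmult_le_compat_l with (r := exp (-lam)) in H0; [|lra].
 rewrite <- exp_plus in H0. replace (- lam + lam) with 0 in H0 by ring. rewrite exp_0 in H0. auto. Qed.

Definition sL (h : cplx -> R) (l : list cplx) : R := fold_right (fun x acc => h x + acc) 0 l.

Lemma sL_nonneg h l : (forall x, 0 <= h x) -> 0 <= sL h l.
Proof. intros H; induction l; simpl; [lra|]. pose proof (H a); lra. Qed.


Lemma sL_split (h : cplx -> R) dd M l : (forall x, In x l -> (x dd < M)%nat) ->
  sL h l = sumR M (fun j => sL h (filter (fun x => Nat.eqb (x dd) j) l)).
Proof. induction l as [|x l IH]; intros H; simpl.
 - rewrite sumR_zero; auto.
 - rewrite IH by (intros; apply H; simpl; auto). symmetry.
   rewrite (sumR_ext M _ (fun j => (if Nat.eqb (x dd) j then h x else 0) + sL h (filter (fun x => Nat.eqb (x dd) j) l))).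
   2:{ intros j Hj. simpl. destruct (Nat.eqb (x dd) j); simpl; ring. }
   rewrite sumR_plus. rewrite (sumR_ext M _ (fun j => if Nat.eqb j (x dd) then h x else 0)) by (intros; rewrite Nat.eqb_sym; auto).
   rewrite sumR_single. ring. apply H; simpl; auto. Qed.

Definition maxL dd (l : list cplx) : nat := fold_right (fun x acc => max (x dd) acc) 0%nat l.
Lemma maxL_spec dd l x : In x l -> (x dd <= maxL dd l)%nat.
Proof. induction l; simpl; intros H; [contradiction|]. destruct H. subst; lia. specialize (IHl H); lia. Qed.

Definition proj_d dd (x : cplx) : cplx := fun i => if Nat.eqb i dd then 0%nat else x i.

Lemma sL_map h f l : sL h (map f l) = sL (fun x => h (f x)) l.
Proof. induction l; simpl; auto. rewrite IHl; auto. Qed.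

Lemma sL_scal h a l : sL (fun x => a * h x) l = a * sL h l.
Proof. induction l; simpl. ring. rewrite IHl; ring. Qed.

Lemma sL_ext h1 h2 l : (forall x, In x l -> h1 x = h2 x) -> sL h1 l = sL h2 l.
Proof. induction l; simpl; intros H; auto. rewrite H, IHl; auto. Qed.

Lemma multi_sum (F : nat -> nat -> R) :
  (forall i j, 0 <= F i j) -> (forall i N, sumR N (F i) <= 1) ->
  forall d l, NoDup l -> (forall x, In x l -> is_state d x) ->
  sL (fun x => prodR d (fun i => F i (x i))) l <= 1.
Proof. intros Fpos Fsum d. induction d; intros l Hnd Hst.
 - simpl. destruct l as [|x [|y l]]; simpl; try lra.
   exfalso. assert (x = y). { apply functional_extensionality. intros i.
     rewrite (Hst x), (Hst y); simpl; auto; lia. }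
   subst. inversion Hnd. apply H1. simpl; auto.
 - set (M := S (maxL d l)).
   rewrite (sL_split _ d M l) by (intros; unfold M; pose proof (maxL_spec d l x H); lia).
   apply Rle_trans with (sumR M (F d)); [|apply Fsum].
   apply sumR_le. intros j Hj.
   rewrite (sL_ext _ (fun x => F d j * prodR d (fun i => F i (proj_d d x i)))).
   2:{ intros x Hx. apply filter_In in Hx. destruct Hx as [_ Hx]. apply Nat.eqb_eq in Hx. simpl. rewrite Hx.
       rewrite Rmult_comm. f_equal. apply prodR_ext. intros i Hi. unfold proj_d. destruct (Nat.eqb_spec i d); auto; lia. }
   rewrite sL_scal. rewrite <- (sL_map (fun y => prodR d (fun i => F i (y i)))).
   assert (0 <= F d j) by auto.
   assert (sL (fun y => prodR d (fun i => F i (y i))) (map (proj_d d) (filter (fun x => Nat.eqb (x d) j) l)) <= 1).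
   { apply IHd.
     - apply NoDup_map_NoDup_ForallPairs. 2:apply NoDup_filter; auto.
       intros x y Hx Hy E. apply filter_In in Hx, Hy. destruct Hx as [_ Hx]; destruct Hy as [_ Hy].
       apply Nat.eqb_eq in Hx, Hy. apply functional_extensionality. intros i.
       destruct (Nat.eq_dec i d). subst; congruence.
       apply (f_equal (fun z => z i)) in E. unfold proj_d in E. destruct (Nat.eqb_spec i d); auto; lia.
     - intros z Hz. apply in_map_iff in Hz. destruct Hz as [x [Ex Hx]]. subst z.
       apply filter_In in Hx. destruct Hx as [Hx _]. intros i Hi. unfold proj_d.
       destruct (Nat.eqb_spec i d); auto. apply (Hst x Hx). lia. }
   nra. Qed.

Lemma poisson_sum_le1 d Vol c l : 0 < Vol -> pos_vec d c -> NoDup l -> (forall x, In x l -> is_state d x) ->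
  fold_right (fun x acc => poisson d Vol c x + acc) 0 l <= 1.
Proof. intros HV Hc Hnd Hst.
 pose (F := fun i j => if Nat.ltb i d then (Vol * c i) ^ j / INR (fact j) * exp (- (Vol * c i)) else 0).
 assert (E : fold_right (fun x acc => poisson d Vol c x + acc) 0 l = sL (fun x => prodR d (fun i => F i (x i))) l).
 { apply sL_ext. intros x _. unfold poisson. apply prodR_ext. intros i Hi. unfold F.
   destruct (Nat.ltb_spec i d); auto; lia. }
 rewrite E. apply multi_sum; auto.
 - intros i j. unfold F. destruct (Nat.ltb_spec i d); [|lra]. pose proof (Hc i H).
   apply Rmult_le_pos. apply Rmult_le_pos. apply pow_le; nra. left; apply Rinv_0_lt_compat, INR_fact_lt_0. left; apply exp_pos.
 - intros i N. unfold F. destruct (Nat.ltb_spec i d).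
   + apply poisson1_partial. pose proof (Hc i H); nra.
   + rewrite sumR_zero; auto; lra. Qed.

Fixpoint sumZ (n : nat) (f : nat -> Z) : Z :=
  match n with O => 0%Z | S n' => (sumZ n' f + f n')%Z end.

Lemma sumZ_ext n f g : (forall i, (i < n)%nat -> f i = g i) -> sumZ n f = sumZ n g.
Proof. induction n; simpl; intros H; auto. rewrite IHn by (intros; apply H; lia). rewrite H by lia; auto. Qed.

Lemma IZR_sumZ n f : IZR (sumZ n f) = sumR n (fun k => IZR (f k)).
Proof. induction n; simpl; auto. rewrite plus_IZR, IHn; auto. Qed.

Section Reach.
Variables (d m : nat) (nu nu' : nat -> cplx) (kV : nat -> R) (G : cplx -> Prop) (X0 : cplx).
Hypothesis kVpos : forall k, (k < m)%nat -> 0 < kV k.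
Hypothesis Gclosed : forall x y, G x -> step d m nu nu' kV x y -> G y.
Hypothesis GX0 : G X0.
Hypothesis X0st : is_state d X0.

Local Open Scope Z_scope.
Definition stZ (p : nat -> nat) (i : nat) : Z :=
  (Z.of_nat (X0 i) + sumZ m (fun k => Z.of_nat (p k) * (Z.of_nat (nu' k i) - Z.of_nat (nu k i))))%Z.
Definition st (p : nat -> nat) : cplx := fun i => if Nat.ltb i d then Z.to_nat (stZ p i) else 0%nat.
Definition incr (p : nat -> nat) (k : nat) : nat -> nat := fun j => if Nat.eqb j k then S (p k) else p j.

Definition enabled (p : nat -> nat) := forall k i, (k < m)%nat -> (i < d)%nat -> (Z.of_nat (nu k i) <= stZ p i)%Z.

Lemma stZ_incr p k i : (k < m)%nat -> stZ (incr p k) i = (stZ p i + Z.of_nat (nu' k i) - Z.of_nat (nu k i))%Z.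
Proof. intros Hk. unfold stZ.
 assert (forall n, (k < n)%nat -> sumZ n (fun j => Z.of_nat (incr p k j) * (Z.of_nat (nu' j i) - Z.of_nat (nu j i)))
   = (sumZ n (fun j => Z.of_nat (p j) * (Z.of_nat (nu' j i) - Z.of_nat (nu j i))) + Z.of_nat (nu' k i) - Z.of_nat (nu k i))%Z).
 { induction n; intros Hn; [lia|]. simpl. destruct (Nat.eq_dec k n).
   - subst. rewrite (sumZ_ext n _ (fun j => Z.of_nat (p j) * (Z.of_nat (nu' j i) - Z.of_nat (nu j i)))%Z).
     2:{ intros j Hj. unfold incr. destruct (Nat.eqb_spec j n); auto; lia. }
     unfold incr. rewrite Nat.eqb_refl. rewrite Nat2Z.inj_succ. lia.
   - rewrite IHn by lia. unfold incr. destruct (Nat.eqb_spec n k); [lia|]. lia. }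
 rewrite H by auto. lia. Qed.

Lemma st_jump p k : (k < m)%nat -> (forall i, (i < d)%nat -> (Z.of_nat (nu k i) <= stZ p i)%Z) ->
  jump d nu nu' k (st p) = st (incr p k).
Proof. intros Hk H. apply functional_extensionality. intros i. unfold jump, st.
 destruct (Nat.ltb_spec i d); auto. rewrite stZ_incr by auto. specialize (H i H0). lia. Qed.

Lemma intensity_pos p k : (k < m)%nat -> (forall i, (i < d)%nat -> (Z.of_nat (nu k i) <= stZ p i)%Z) ->
  (0 < intensity d kV nu k (st p))%R.
Proof. intros Hk H. unfold intensity. apply Rmult_lt_0_compat; auto. apply prodR_pos. intros i Hi.
 unfold ffact_ind, st. destruct (Nat.ltb_spec i d); [|lia]. specialize (H i Hi).
 replace (Nat.leb (nu k i) (Z.to_nat (stZ p i))) with true by (symmetry; apply Nat.leb_le; lia).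
 apply Rdiv_lt_0_compat; apply INR_fact_lt_0. Qed.

Lemma G_step p k : (k < m)%nat -> enabled p -> G (st p) -> G (st (incr p k)).
Proof. intros Hk He HG. apply (Gclosed (st p)); auto. exists k. split; [auto|split].
 - apply intensity_pos; auto.
 - symmetry. apply st_jump; auto. Qed.

Lemma st_ext p q : (forall k, (k < m)%nat -> p k = q k) -> st p = st q.
Proof. intros H. apply functional_extensionality. intros i. unfold st, stZ.
 rewrite (sumZ_ext m _ (fun k => Z.of_nat (q k) * (Z.of_nat (nu' k i) - Z.of_nat (nu k i)))%Z); auto.
 intros; rewrite H; auto. Qed.

Lemma find_lt p q : forall n, (forall k, (k < n)%nat -> (p k <= q k)%nat) -> sumN n (fun k => q k - p k)%nat <> 0%nat ->
  exists k, (k < n)%nat /\ (p k < q k)%nat.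
Proof. induction n; simpl; intros H1 H2; [lia|].
 destruct (Nat.lt_ge_cases (p n) (q n)). exists n; split; auto.
 destruct IHn as [k [Hk Hk2]]; [intros; apply H1; lia|lia|]. exists k; split; auto. Qed.

Lemma sumN_ext n f g : (forall i, (i < n)%nat -> f i = g i) -> sumN n f = sumN n g.
Proof. induction n; simpl; intros H; auto. rewrite IHn by (intros; apply H; lia). rewrite H by lia; auto. Qed.

Lemma sumN_incr p q k : forall n, (k < n)%nat -> (p k < q k)%nat ->
  (sumN n (fun j => q j - incr p k j) + 1 = sumN n (fun j => q j - p j))%nat.
Proof. induction n; simpl; intros H1 H2; [lia|]. unfold incr at 2.
 destruct (Nat.eq_dec k n).
 - subst. rewrite Nat.eqb_refl.
   rewrite (sumN_ext n (fun j => q j - incr p n j)%nat (fun j => q j - p j)%nat). lia.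
   intros j Hj. unfold incr. destruct (Nat.eqb_spec j n); auto; lia.
 - destruct (Nat.eqb_spec n k); [lia|]. specialize (IHn ltac:(lia) H2). lia. Qed.

Lemma sumN_zero_inv n f : sumN n f = 0%nat -> forall k, (k < n)%nat -> f k = 0%nat.
Proof. induction n; simpl; intros H k Hk; [lia|]. destruct (Nat.eq_dec k n). subst; lia. apply IHn; lia. Qed.

Lemma box_reach : forall s p q, (forall k, (k < m)%nat -> (p k <= q k)%nat) ->
  sumN m (fun k => q k - p k)%nat = s ->
  (forall p', (forall k, (k < m)%nat -> (p k <= p' k <= q k)%nat) -> enabled p') ->
  G (st p) -> G (st q).
Proof. induction s; intros p q Hpq Hs Hbox HG.
 - replace (st q) with (st p); auto. apply st_ext. intros k Hk.
   pose proof (sumN_zero_inv _ _ Hs k Hk). specialize (Hpq k Hk). simpl in H. lia.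
 - destruct (find_lt p q m Hpq) as [k [Hk Hlt]]. lia.
   apply (IHs (incr p k)).
   + intros j Hj. unfold incr. destruct (Nat.eqb_spec j k). subst; lia. auto.
   + pose proof (sumN_incr p q k m Hk Hlt). lia.
   + intros p' Hp'. apply Hbox. intros j Hj. specialize (Hp' j Hj). unfold incr in Hp'.
     destruct (Nat.eqb_spec j k). subst; lia. auto.
   + apply G_step; auto. Qed.

Lemma st_zero : st (fun _ => 0%nat) = X0.
Proof. apply functional_extensionality. intros i. unfold st, stZ.
 destruct (Nat.ltb_spec i d).
 - rewrite (sumZ_ext m _ (fun _ => 0%Z)) by (intros; simpl; lia).
   assert (forall n, sumZ n (fun _ => 0%Z) = 0%Z) by (induction n; simpl; lia). rewrite H0. lia.
 - rewrite X0st; auto. Qed.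

Lemma rounds (cnt : nat -> nat -> nat) (T : nat) :
  (forall t k, (k < m)%nat -> (cnt t k <= cnt (S t) k)%nat) ->
  (forall k, (k < m)%nat -> cnt O k = O) ->
  (forall t, (t < T)%nat -> forall p', (forall k, (k < m)%nat -> (cnt t k <= p' k <= cnt (S t) k)%nat) -> enabled p') ->
  forall t, (t <= T)%nat -> G (st (cnt t)).
Proof. intros Hmono H0 Hbox. induction t; intros Ht.
 - replace (st (cnt 0%nat)) with (st (fun _ => 0%nat)). rewrite st_zero; auto. apply st_ext. intros; rewrite H0; auto.
 - apply (box_reach (sumN m (fun k => cnt (S t) k - cnt t k)%nat) (cnt t) (cnt (S t))); auto. apply Hbox. lia. apply IHt; lia. Qed.
End Reach.

Definition fl (x : R) : nat := Z.to_nat (Int_part x).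

Lemma fl_bounds x : 0 <= x -> x - 1 < INR (fl x) <= x.
Proof. intros Hx. destruct (base_Int_part x) as [H1 H2].
 assert (0 <= Int_part x)%Z. { apply le_IZR. assert (-1 < IZR (Int_part x)) by lra.
   apply lt_IZR in H. simpl in H. apply IZR_le. lia. }
 unfold fl. rewrite INR_IZR_INZ, Z2Nat.id by auto. lra. Qed.

Lemma fl_mono x y : 0 <= x -> x <= y -> (fl x <= fl y)%nat.
Proof. intros. destruct (Nat.le_gt_cases (fl x) (fl y)); auto. exfalso.
 pose proof (fl_bounds x H). pose proof (fl_bounds y ltac:(lra)).
 apply le_INR in H1. rewrite S_INR in H1. lra. Qed.

Lemma fl_0 : fl 0 = 0%nat.
Proof. pose proof (fl_bounds 0 ltac:(lra)). destruct (fl 0); auto. rewrite S_INR in H. pose proof (pos_INR n). lra. Qed.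

Lemma sumR_ge_term n f k : (forall i, (i < n)%nat -> 0 <= f i) -> (k < n)%nat -> f k <= sumR n f.
Proof. induction n; simpl; intros H Hk; [lia|]. destruct (Nat.eq_dec k n).
 - subst. pose proof (sumR_nonneg n f ltac:(intros; apply H; lia)). lra.
 - pose proof (H n ltac:(lia)). pose proof (IHn ltac:(intros; apply H; lia) ltac:(lia)). lra. Qed.

Lemma stZ_real m nu nu' X0 p i : IZR (stZ m nu nu' X0 p i) = INR (X0 i) + sumR m (fun k => INR (p k) * (INR (nu' k i) - INR (nu k i))).
Proof. unfold stZ. rewrite plus_IZR, IZR_sumZ, <- INR_IZR_INZ. f_equal. apply sumR_ext. intros.
 rewrite mult_IZR, minus_IZR, <- !INR_IZR_INZ. auto. Qed.

Section Bound.
Variables (d m : nat) (nu nu' : nat -> cplx) (b D : nat -> R) (X0 : cplx) (V : R).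
Let r k i := INR (nu' k i) - INR (nu k i).
Definition Cb i := sumR m (fun k => (b k + 1) * Rabs (INR (nu' k i) - INR (nu k i))).
Definition Kb i := Cb i + sumR m (fun k => INR (nu k i)).
Hypothesis Hb : forall k, (k < m)%nat -> 0 <= b k.
Hypothesis HD : forall i, (i < d)%nat -> sumR m (fun k => b k * (INR (nu' k i) - INR (nu k i))) = D i.
Hypothesis HV : 0 < V.
Hypothesis HK : forall i, (i < d)%nat -> Kb i <= INR (X0 i) /\ Kb i <= INR (X0 i) + V * D i.

Lemma stZ_bound t p : 0 <= t <= V -> (forall k, (k < m)%nat -> Rabs (INR (p k) - t * b k) <= b k + 1) ->
  forall i, (i < d)%nat -> sumR m (fun k => INR (nu k i)) <= IZR (stZ m nu nu' X0 p i).
Proof. intros Ht Hp i Hi. rewrite stZ_real.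
 rewrite (sumR_ext m (fun k => INR (p k) * (INR (nu' k i) - INR (nu k i))) (fun k => t * (b k * (INR (nu' k i) - INR (nu k i))) + (INR (p k) - t * b k) * (INR (nu' k i) - INR (nu k i)))) by (intros; ring).
 rewrite sumR_plus, sumR_scal, HD by auto.
 assert (- Cb i <= sumR m (fun k => (INR (p k) - t * b k) * (INR (nu' k i) - INR (nu k i)))).
 { unfold Cb. match goal with |- - ?S <= _ => replace (- S) with (-1 * S) by ring end. rewrite <- sumR_scal.
   apply sumR_le. intros k Hk. set (e := INR (p k) - t * b k). set (rr := INR (nu' k i) - INR (nu k i)).
   specialize (Hp k Hk). fold e in Hp.
   pose proof (Rabs_pos rr). pose proof (Rabs_pos e).
   assert (Rabs (e * rr) <= (b k + 1) * Rabs rr). { rewrite Rabs_mult. apply Rmult_le_compat_r; auto. }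
   pose proof (Rle_abs (- (e * rr))). rewrite Rabs_Ropp in H2. lra. }
 destruct (HK i Hi) as [K1 K2]. unfold Kb in *.
 assert (t * D i + INR (X0 i) >= Kb i).
 { unfold Kb. assert (V * (t * D i + INR (X0 i) - Kb i) >= 0).
   { replace (V * (t * D i + INR (X0 i) - Kb i)) with ((V - t) * (INR (X0 i) - Kb i) + t * (INR (X0 i) + V * D i - Kb i)) by ring.
     unfold Kb. apply Rle_ge. apply Rplus_le_le_0_compat; apply Rmult_le_pos; lra. }
   unfold Kb in H0. nra. }
 unfold Kb in H0. lra. Qed.

Lemma enabled_of t p : 0 <= t <= V -> (forall k, (k < m)%nat -> Rabs (INR (p k) - t * b k) <= b k + 1) ->
  enabled d m nu nu' X0 p.
Proof. intros Ht Hp k i Hk Hi. apply le_IZR. rewrite <- INR_IZR_INZ.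
 apply Rle_trans with (sumR m (fun k => INR (nu k i))). apply (sumR_ge_term m (fun k => INR (nu k i))); auto.
 intros; apply pos_INR. apply (stZ_bound t); auto. Qed.
End Bound.

Lemma ev_large (V u : nat -> R) L K : (forall n, 0 < V n) -> (forall M, exists N, forall n, (N <= n)%nat -> M < V n) ->
  Un_cv u L -> 0 < L -> ev (fun n => K <= u n * V n).
Proof. intros Vpos Vinf Hu HL. destruct (ev_and _ _ (ev_cv_pos u L Hu HL) (ev_V_ge V Vinf (2 * Rabs K / L))) as [N HN].
 exists N. intros n Hn. destruct (HN n Hn) as [H1 H2]. pose proof (Rle_abs K). pose proof (Rabs_pos K).
 assert (L / 2 * (2 * Rabs K / L) = Rabs K) by (field; lra).
 assert (0 <= 2 * Rabs K / L) by (apply Rdiv_le_0_compat; lra).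
 assert (L / 2 * (2 * Rabs K / L) <= u n * V n). { apply Rmult_le_compat; lra. }
 lra. Qed.

Lemma kappaV_pos d kappa nu Vol m : 0 < Vol -> (forall k, (k < m)%nat -> 0 < kappa k) ->
  forall k, (k < m)%nat -> 0 < kappaV d kappa nu Vol k.
Proof. intros. unfold kappaV. apply Rdiv_lt_0_compat; auto. apply powerRZ_lt; auto. Qed.

Section Reach2.
Variables (d m : nat) (nu nu' : nat -> cplx) (kappa : nat -> R) (Vs : nat -> R) (X : nat -> cplx) (xt c : vec).
Hypothesis Hk : forall k, (k < m)%nat -> 0 < kappa k.
Hypothesis Vpos : forall n, 0 < Vs n.
Hypothesis Vinf : forall M, exists N, forall n, (N <= n)%nat -> M < Vs n.
Hypothesis Xst : forall n, is_state d (X n).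
Hypothesis Hxt : pos_vec d xt.
Hypothesis HX : forall i, (i < d)%nat -> Un_cv (fun n => INR (X n i) / Vs n) (xt i).
Hypothesis Hcb : complex_balanced d m nu nu' kappa c.
Variable a : nat -> R.
Hypothesis Ha : forall i, (i < d)%nat -> c i - xt i = sumR m (fun k => a k * (INR (nu' k i) - INR (nu k i))).

Let w k := kappa k * monom d c (nu k).
Let T0 := sumR m (fun k => Rabs (a k) / w k).
Definition bb k := a k + T0 * w k.
Let D i := c i - xt i.

Lemma w_pos' k : (k < m)%nat -> 0 < w k.
Proof. intros. unfold w. destruct Hcb as [Hc _]. apply Rmult_lt_0_compat; auto. apply prodR_pos. intros.
 apply pow_lt. apply Hc; auto. Qed.

Lemma bb_nonneg k : (k < m)%nat -> 0 <= bb k.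
Proof. intros Hkm. unfold bb. pose proof (w_pos' k Hkm).
 assert (Rabs (a k) / w k <= T0).
 { apply (sumR_ge_term m (fun k => Rabs (a k) / w k)); auto. intros. apply Rdiv_le_0_compat. apply Rabs_pos. apply w_pos'; auto. }
 apply Rmult_le_compat_r with (r := w k) in H0; [|lra]. unfold Rdiv in H0. rewrite Rmult_assoc, Rinv_l in H0 by lra.
 pose proof (Rle_abs (- a k)). rewrite Rabs_Ropp in H1. lra. Qed.

Lemma bb_D i : (i < d)%nat -> sumR m (fun k => bb k * (INR (nu' k i) - INR (nu k i))) = D i.
Proof. intros Hi. unfold bb, D. rewrite Ha by auto.
 rewrite (sumR_ext m _ (fun k => a k * (INR (nu' k i) - INR (nu k i)) + T0 * (w k * (INR (nu' k i) - INR (nu k i))))) by (intros; ring).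
 rewrite sumR_plus, sumR_scal. destruct Hcb as [_ [Hdr _]]. specialize (Hdr i Hi). unfold drift in Hdr. unfold w.
 rewrite Hdr. ring. Qed.

Definition cntf (t : nat) (k : nat) : nat := fl (INR t * bb k).
Definition Tn n := fl (Vs n).
Definition Yseq n : cplx := st d m nu nu' (X n) (cntf (Tn n)).

Lemma ev_HK : ev (fun n => forall i, (i < d)%nat -> Kb m nu nu' bb i <= INR (X n i) /\ Kb m nu nu' bb i <= INR (X n i) + Vs n * D i).
Proof. apply ev_forall_lt. intros i Hi. apply ev_and.
 - apply (ev_mono (fun n => Kb m nu nu' bb i <= INR (X n i) / Vs n * Vs n)).
   + intros n Hn. replace (INR (X n i) / Vs n * Vs n) with (INR (X n i)) in Hn; auto. field. pose proof (Vpos n); lra.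
   + apply (ev_large Vs (fun n => INR (X n i) / Vs n) (xt i)); auto.
 - apply (ev_mono (fun n => Kb m nu nu' bb i <= (INR (X n i) / Vs n + D i) * Vs n)).
   + intros n Hn. replace ((INR (X n i) / Vs n + D i) * Vs n) with (INR (X n i) + Vs n * D i) in Hn; auto. field. pose proof (Vpos n); lra.
   + apply (ev_large Vs _ (xt i + D i)); auto.
     apply (CV_plus (fun n => INR (X n i) / Vs n) (fun _ => D i)). auto. apply cv_const.
     unfold D. destruct Hcb as [Hc _]. pose proof (Hc i Hi). lra.
Qed.

Lemma cnt_step_bound t p k : (k < m)%nat -> (cntf t k <= p k <= cntf (S t) k)%nat ->
  Rabs (INR (p k) - INR t * bb k) <= bb k + 1.
Proof. intros Hkm [H1 H2]. apply le_INR in H1, H2. pose proof (bb_nonneg k Hkm). pose proof (pos_INR t).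
 unfold cntf in *. pose proof (fl_bounds (INR t * bb k) ltac:(nra)).
 pose proof (fl_bounds (INR (S t) * bb k) ltac:(rewrite S_INR; nra)). rewrite S_INR in *.
 apply Rabs_le. nra. Qed.

Lemma Tn_bounds n : Vs n - 1 < INR (Tn n) <= Vs n.
Proof. unfold Tn. apply fl_bounds. left; auto. Qed.

Lemma Y_reach (G : nat -> cplx -> Prop) :
  (forall n, closed_irred_component d m nu nu' (kappaV d kappa nu (Vs n)) (G n)) ->
  (forall n, G n (X n)) -> ev (fun n => G n (Yseq n)).
Proof. intros HG HGX. pose proof ev_HK as E. revert E. apply ev_mono. intros n HK. unfold Yseq. destruct (HG n) as [_ [_ [Hcl _]]].
 apply (rounds d m nu nu' (kappaV d kappa nu (Vs n)) (G n) (X n)) with (T := Tn n); auto.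
 - apply kappaV_pos; auto.
 - intros t k Hkm. unfold cntf. apply fl_mono. pose proof (bb_nonneg k Hkm). pose proof (pos_INR t). nra.
   rewrite S_INR. pose proof (bb_nonneg k Hkm). nra.
 - intros k Hkm. unfold cntf. rewrite Rmult_0_l. apply fl_0.
 - intros t Ht p' Hp'. apply (enabled_of d m nu nu' bb D (X n) (Vs n)) with (t := INR t); auto.
   + apply bb_D.
   + split. apply pos_INR. apply Rle_trans with (INR (Tn n)). apply le_INR; lia. apply Tn_bounds.
   + intros k Hkm. apply cnt_step_bound; auto.
Qed.

Lemma cnt_cv k : (k < m)%nat -> Un_cv (fun n => INR (cntf (Tn n) k) / Vs n) (bb k).
Proof. intros Hkm. pose proof (bb_nonneg k Hkm).
 apply (squeeze (fun n => bb k - (bb k + 1) * / Vs n) _ (fun _ => bb k)).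
 - exists O. intros n _. pose proof (Tn_bounds n). pose proof (Vpos n). unfold cntf.
   pose proof (fl_bounds (INR (Tn n) * bb k) ltac:(pose proof (pos_INR (Tn n)); nra)).
   split.
   + replace (bb k - (bb k + 1) * / Vs n) with (((Vs n - 1) * bb k - 1) / Vs n) by (field; lra).
     unfold Rdiv. apply Rmult_le_compat_r. left; apply Rinv_0_lt_compat; auto. nra.
   + apply (Rmult_le_reg_r (Vs n)); auto. unfold Rdiv. rewrite Rmult_assoc, Rinv_l by lra. nra.
 - assert (H2 : Un_cv (fun n => bb k - (bb k + 1) * / Vs n) (bb k - (bb k + 1) * 0)).
   { apply (CV_minus (fun _ => bb k) (fun n => (bb k + 1) * / Vs n)). apply cv_const.
     apply (CV_mult (fun _ => bb k + 1) (fun n => / Vs n)). apply cv_const. apply cv_invV; auto. }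
   rewrite Rmult_0_r, Rminus_0_r in H2. exact H2.
 - apply cv_const. Qed.

Lemma Y_cv i : (i < d)%nat -> Un_cv (fun n => INR (Yseq n i) / Vs n) (c i).
Proof. intros Hi.
 apply Un_cv_ev with (v := fun n => INR (X n i) / Vs n + sumR m (fun k => INR (cntf (Tn n) k) / Vs n * (INR (nu' k i) - INR (nu k i)))).
 - pose proof ev_HK as E. revert E. apply ev_mono. intros n HK. unfold Yseq, st. destruct (Nat.ltb_spec i d); [|lia].
   assert (0 <= IZR (stZ m nu nu' (X n) (cntf (Tn n)) i)).
   { apply Rle_trans with (sumR m (fun k => INR (nu k i))). apply sumR_nonneg; intros; apply pos_INR.
     apply (stZ_bound d m nu nu' bb D (X n) (Vs n)) with (t := INR (Tn n)); auto.
     apply bb_D. split. apply pos_INR. apply Tn_bounds.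
     intros k Hkm. pose proof (bb_nonneg k Hkm). unfold cntf.
     pose proof (fl_bounds (INR (Tn n) * bb k) ltac:(pose proof (pos_INR (Tn n)); nra)). apply Rabs_le. lra. }
   apply le_IZR in H0. rewrite INR_IZR_INZ, Z2Nat.id by auto. rewrite stZ_real.
   pose proof (Vpos n). unfold Rdiv. rewrite Rmult_plus_distr_r. f_equal. rewrite Rmult_comm, <- sumR_scal.
   apply sumR_ext. intros; ring.
 - replace (c i) with (xt i + sumR m (fun k => bb k * (INR (nu' k i) - INR (nu k i)))).
   2:{ rewrite bb_D by auto. unfold D. ring. }
   apply CV_plus. apply HX; auto.
   apply (CV_sumR m (fun k n => INR (cntf (Tn n) k) / Vs n * (INR (nu' k i) - INR (nu k i)))).
   intros k Hkm. apply CV_mult. apply cnt_cv; auto. apply cv_const. Qed.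
End Reach2.

Theorem theorem3p1 (d m : nat) (nu nu' : nat -> cplx) (kappa : nat -> R)
  (Vs : nat -> R) (X : nat -> cplx) (xt c : vec) :
  (forall k, (k < m)%nat -> 0 < kappa k) ->
  (exists c0, complex_balanced d m nu nu' kappa c0) ->
  0 < Vs 0%nat ->
  (forall n, Vs n < Vs (S n)) ->
  (forall M, exists N, forall n, (N <= n)%nat -> M < Vs n) ->
  (forall n, is_state d (X n)) ->
  pos_vec d xt ->
  (forall i, (i < d)%nat -> Un_cv (fun n => INR (X n i) / Vs n) (xt i)) ->
  complex_balanced d m nu nu' kappa c ->
  in_stoich d m nu nu' (fun i => c i - xt i) ->
  Un_cv (fun n => - (/ Vs n) * ln (poisson d (Vs n) c (X n))) (lyap d c xt) /\
  (forall (G : nat -> cplx -> Prop) (Z : nat -> R),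
     (forall n, closed_irred_component d m nu nu' (kappaV d kappa nu (Vs n)) (G n)) ->
     (forall n, G n (X n)) ->
     (forall n, normalizer d (Vs n) c (G n) (Z n)) ->
     (forall n, 0 < Z n) /\
     Un_cv (fun n => / Vs n * ln (Z n)) 0 /\
     Un_cv (fun n => - (/ Vs n) * ln (poisson d (Vs n) c (X n) / Z n)) (lyap d c xt)) /\
  lyap d c c = 0 /\
  (forall x : vec, pos_vec d x -> in_stoich d m nu nu' (fun i => x i - c i) ->
     (exists i, (i < d)%nat /\ x i <> c i) -> 0 < lyap d c x) /\
  (forall x : vec, pos_vec d x -> in_stoich d m nu nu' (fun i => x i - c i) ->
     exists g : vec,
       (forall i, (i < d)%nat ->
          derivable_pt_lim (fun t => lyap d c (upd x i t)) (x i) (g i)) /\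
       sumR d (fun i => g i * drift d m nu nu' kappa x i) <= 0 /\
       (sumR d (fun i => g i * drift d m nu nu' kappa x i) = 0 <->
        forall i, (i < d)%nat -> x i = c i)).
Proof.
 intros Hk _ V0 Vinc Vinf Xst Hxt HX Hcb Hst.
 assert (Vpos : forall n, 0 < Vs n). { induction n; auto. pose proof (Vinc n); lra. }
 assert (Hc : pos_vec d c) by (destruct Hcb; auto).
 assert (HA : Un_cv (fun n => - (/ Vs n) * ln (poisson d (Vs n) c (X n))) (lyap d c xt)).
 { apply partA_gen; auto. }
 split; [exact HA|split; [|apply partC; auto]].
 intros G Z HG HGX HZ.
 assert (Zge : forall n y, G n y -> poisson d (Vs n) c y <= Z n).
 { intros n y Hy. destruct (HZ n) as [Hub _]. apply Hub. exists (y :: nil). split.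
   constructor. simpl; auto. constructor. split. intros x [Hx|[]]. subst; auto. simpl. ring. }
 assert (Zpos : forall n, 0 < Z n).
 { intros n. pose proof (Zge n (X n) (HGX n)). pose proof (poisson_pos d (Vs n) c (X n) (Vpos n) Hc). lra. }
 assert (Zle1 : forall n, Z n <= 1).
 { intros n. destruct (HZ n) as [_ Hlub]. apply Hlub. intros r [l [Hnd [Hin Hr]]]. subst r.
   apply poisson_sum_le1; auto. intros x Hx. destruct (HG n) as [_ [Hs _]]. apply Hs. auto. }
 destruct Hst as [a Ha].
 set (Y := Yseq d m nu nu' kappa Vs X c a).
 assert (HY : ev (fun n => G n (Y n))) by (apply (Y_reach d m nu nu' kappa Vs X xt c); auto).
 assert (HAY : Un_cv (fun n => - (/ Vs n) * ln (poisson d (Vs n) c (Y n))) (lyap d c c)).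
 { apply partA_gen; auto. intros i Hi. apply (Y_cv d m nu nu' kappa Vs X xt c); auto. }
 rewrite lyap_cc in HAY by auto.
 assert (HlnZ : Un_cv (fun n => / Vs n * ln (Z n)) 0).
 { apply (squeeze (opp_seq (fun n => - (/ Vs n) * ln (poisson d (Vs n) c (Y n)))) _ (fun _ => 0)).
   - revert HY. apply ev_mono. intros n HGn. unfold opp_seq.
     pose proof (Vpos n). pose proof (Zge n (Y n) HGn). pose proof (poisson_pos d (Vs n) c (Y n) (Vpos n) Hc).
     pose proof (Zpos n). pose proof (Zle1 n). assert (0 < / Vs n) by (apply Rinv_0_lt_compat; auto).
     split.
     + replace (- (- / Vs n * ln (poisson d (Vs n) c (Y n)))) with (/ Vs n * ln (poisson d (Vs n) c (Y n))) by ring.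
       apply Rmult_le_compat_l. lra. apply ln_le; auto.
     + assert (ln (Z n) <= 0). { rewrite <- ln_1. apply ln_le; auto. } nra.
   - replace 0 with (- 0) by ring. apply CV_opp. auto.
   - apply cv_const. }
 split; auto. split; auto.
 apply Un_cv_ev with (v := fun n => - (/ Vs n) * ln (poisson d (Vs n) c (X n)) + / Vs n * ln (Z n)).
 - exists O. intros n _. rewrite ln_div. ring. apply poisson_pos; auto. auto.
 - replace (lyap d c xt) with (lyap d c xt + 0) by ring. apply CV_plus; auto.
Qed.
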